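(* Let $p$ be a prime, $r \geq 1$ an integer, and let $D \in \mathbb{Z}_{p^r}^*$ be such that $D \bmod p$ is a quadratic non-residue in $\mathbb{Z}_p$. Then $(\mathcal{H}_{D,\mathbb{Z}_{p^r}}, \otimes)$ is a cyclic group of order $p^{r-1}(p+1)$; i.e., the Pell equation $x^2 - D y^2 = 1$ has exactly $p^{r-1}(p+1)$ solutions $(x,y) \in \mathbb{Z}_{p^r} \times \mathbb{Z}_{p^r}$.
   Context: For a commutative ring $R$ and $D \in R$, let $\mathcal{H}_{D,R} = \{(x,y) \in R \times R : x^2 - D y^2 = 1\}$, equipped with the product $(x,y) \otimes (w,z) = (xw + yzD,\ yw + xz)$. This is a commutative group with identity $(1,0)$ and inverse of $(x,y)$ equal to $(x,-y)$. Here $\mathbb{Z}_{m}$ denotes the ring of integers modulo $m$. *)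

(* Defs.v *)
From mathcomp Require Import all_boot all_order all_algebra.
Set Implicit Arguments. Unset Strict Implicit. Unset Printing Implicit Defensive.
Import GRing.Theory.
Local Open Scope ring_scope.

Definition onPell (R : comNzRingType) (D : R) (a : R * R) : bool :=
  a.1 ^+ 2 - D * a.2 ^+ 2 == 1.

Definition pell_mul (R : comNzRingType) (D : R) (a b : R * R) : R * R :=
  (a.1 * b.1 + a.2 * b.2 * D, a.2 * b.1 + a.1 * b.2).

Definition pell_pow (R : comNzRingType) (D : R) (g : R * R) (k : nat) : R * R :=
  iter k (pell_mul D g) (1, 0).

(* Main.v *)
Require Import Defs.
From HB Require Import structures.
From mathcomp Require Import all_boot all_order all_algebra all_fingroup all_solvable.
From mathcomp Require Import ring zify.
Set Implicit Arguments. Unset Strict Implicit. Unset Printing Implicit Defensive.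
Set Warnings "-notation-overridden,-ambiguous-paths,-redundant-canonical-projection".
Import GRing.Theory.
Local Open Scope ring_scope.

Section PellGroupDef.
Variables (R : finComNzRingType) (D : R).

Definition pellT := {a : R * R | onPell D a}.

Lemma pell_mul_on (a b : R * R) : onPell D a -> onPell D b -> onPell D (pell_mul D a b).
Proof.
case: a b => [x y] [w z]; rewrite /onPell /pell_mul /= => /eqP Ea /eqP Eb.
have -> : (x * w + y * z * D) ^+ 2 - D * (y * w + x * z) ^+ 2
   = (x ^+ 2 - D * y ^+ 2) * (w ^+ 2 - D * z ^+ 2) by ring.
by rewrite Ea Eb mulr1.
Qed.

Lemma one_on : onPell D (1, 0).
Proof. by rewrite /onPell /= expr1n expr0n /= mulr0 subr0. Qed.

Lemma inv_on (a : R * R) : onPell D a -> onPell D (a.1, - a.2).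
Proof. by rewrite /onPell /= sqrrN. Qed.

Definition pmul (a b : pellT) : pellT := exist (fun c : R * R => onPell D c) _ (pell_mul_on (valP a) (valP b)).
Definition pone : pellT := exist (fun c : R * R => onPell D c) _ one_on.
Definition pinv (a : pellT) : pellT := exist (fun c : R * R => onPell D c) _ (inv_on (valP a)).

Lemma pmulA : associative pmul.
Proof.
move=> a b c; apply: val_inj => /=.
case: a b c => [[x y] ha] [[w z] hb] [[u v] hc]; rewrite /pell_mul /=.
by congr pair; ring.
Qed.

Lemma pmul1 : left_id pone pmul.
Proof.
move=> a; apply: val_inj => /=.
case: a => [[x y] ha]; rewrite /pell_mul /=.
by congr pair; ring.
Qed.

Lemma pmulV : left_inverse pone pinv pmul.
Proof.
move=> a; apply: val_inj => /=.
case: a => [[x y] ha]; rewrite /pell_mul /=.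
move: (ha) => /eqP E.
congr pair; last by ring.
by transitivity (x ^+ 2 - D * y ^+ 2); [ring | rewrite E].
Qed.

End PellGroupDef.

HB.instance Definition _ (R : finComNzRingType) (D : R) := Finite.on (pellT D).
HB.instance Definition _ (R : finComNzRingType) (D : R) :=
  Finite_isGroup.Build (pellT D) (@pmulA R D) (@pmul1 R D) (@pmulV R D).

Section PellVal.
Variables (R : finComNzRingType) (D : R).
Lemma pvalM (a b : pellT D) : val (a * b)%g = pell_mul D (val a) (val b).
Proof. by []. Qed.
Lemma pvalX (a : pellT D) k : val (a ^+ k)%g = pell_pow D (val a) k.
Proof.
elim: k => [|k IH]; first by [].
by rewrite expgS pvalM IH.
Qed.
End PellVal.
Section Emb.
Variables (R : comNzRingType) (D : R).

Definition emb (a : R * R) : 'M[R]_2 :=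
  \matrix_(i < 2, j < 2)
    (if i == j then a.1 else if (i : nat) == 0%N then D * a.2 else a.2).

Lemma emb_mul a b : emb (pell_mul D a b) = emb a *m emb b.
Proof.
apply/matrixP => i j; rewrite !mxE !big_ord_recl big_ord0 !mxE /=.
case: a b => [x y] [w z]; rewrite /pell_mul /=.
by case: i => [[|[|//]] ?]; case: j => [[|[|//]] ?] /=; ring.
Qed.

Lemma emb1 : emb (1, 0) = 1%:M.
Proof.
apply/matrixP => i j; rewrite !mxE /=.
by case: i => [[|[|//]] ?]; case: j => [[|[|//]] ?] /=; rewrite ?mulr0.
Qed.

Lemma emb_inj : injective emb.
Proof.
move=> [x y] [w z] E.
have E1 := congr1 (fun M : 'M[R]_2 => M 0 0) E.
have E2 := congr1 (fun M : 'M[R]_2 => M 1 0) E.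
by move: E1 E2; rewrite /= !mxE /= => -> ->.
Qed.

Lemma emb_sub1 a : emb a - 1%:M = emb (a.1 - 1, a.2).
Proof.
apply/matrixP => i j; rewrite !mxE /=.
by case: i => [[|[|//]] ?]; case: j => [[|[|//]] ?] /=; rewrite ?subr0.
Qed.

Lemma emb_muln a b n : emb (a *+ n, b *+ n) = emb (a, b) *+ n.
Proof.
apply/matrixP => i j; rewrite mulmxnE !mxE /=.
by case: (i == j) => //; case: (_ == _); rewrite ?mulrnAr.
Qed.

End Emb.

Lemma emb_unit (R : comUnitRingType) (D : R) (s t : R) :
  s ^+ 2 - D * t ^+ 2 \is a GRing.unit -> emb D (s, t) \is a GRing.unit.
Proof.
set n := s ^+ 2 - D * t ^+ 2 => nU.
have E : pell_mul D (s, t) (s * n^-1, - t * n^-1) = (1, 0).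
  rewrite /pell_mul /=; congr pair; last by ring.
  by rewrite -(mulrV nU) /n; ring.
have E' : pell_mul D (s * n^-1, - t * n^-1) (s, t) = (1, 0).
  rewrite /pell_mul /=; congr pair; last by ring.
  by rewrite -(mulrV nU) /n; ring.
apply/unitrP; exists (emb D (s * n^-1, - t * n^-1)).
by rewrite -!mulmxE -!emb_mul E E' emb1.
Qed.

Lemma bin_dvd p m i : prime p -> (2 < p)%N -> (0 < m)%N -> (i.+2 <= p)%N ->
  (p ^ m.+2 %| p ^ (m * i.+2) * 'C(p, i.+2))%N.
Proof.
move=> pP p2 m0; rewrite leq_eqVlt => /orP [/eqP Ei| lti].
  rewrite Ei binn muln1 dvdn_exp2l //.
  have : (m * 3 <= m * p)%N by rewrite leq_mul2l p2 orbT.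
  lia.
rewrite expnSr dvdn_mul //; last by apply: prime_dvd_bin; lia.
rewrite dvdn_exp2l //; lia.
Qed.

Lemma lte_step (S : pzRingType) p m (e : S) : prime p -> (2 < p)%N -> (0 < m)%N ->
  exists t : S, (1 + e *+ p ^ m) ^+ p = 1 + (e + t *+ p) *+ p ^ m.+1.
Proof.
move=> pP p2 m0.
exists (\sum_(i < p.-1) e ^+ i.+2 *+ ((p ^ (m * i.+2) * 'C(p, i.+2)) %/ p ^ m.+2)).
case: p pP p2 => [|[|q]] // pP p2.
rewrite addrC exprD1n (big_ord_recl q.+2) (big_ord_recl q.+1) /=.
rewrite expr0 bin0 mulr1n /bump /= expr1 bin1 addrA.
rewrite mulrnDl -!mulrnA -expnSr -expnS -addrA; congr (_ + (_ + _)).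
rewrite -sumrMnl; apply: eq_bigr => i _; rewrite !add1n.
rewrite -mulrnA divnK; last by apply: bin_dvd => //; have := ltn_ord i; lia.
by rewrite exprMn_n -mulrnA expnM.
Qed.

Lemma lte_iter (S : pzRingType) p m (X e : S) : prime p -> (2 < p)%N -> (0 < m)%N ->
  X = 1 + e *+ p ^ m ->
  forall j, exists2 e' : S, X ^+ (p ^ j) = 1 + e' *+ p ^ (m + j) & exists t, e' = e + t *+ p.
Proof.
move=> pP p2 m0 EX; elim=> [|j [e' Ej [t Et]]].
  exists e; first by rewrite expn0 expr1 addn0.
  by exists 0; rewrite mul0rn addr0.
have mj : (0 < m + j)%N by lia.
have [t' Ht'] := lte_step e' pP p2 mj.
exists (e' + t' *+ p); first by rewrite expnSr exprM Ej Ht' addnS.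
by exists (t + t'); rewrite Et mulrnDl addrA.
Qed.
Section Pell.
Variables (p r : nat).
Hypotheses (pP : prime p) (r0 : (0 < r)%N).
Local Notation R := 'Z_(p ^ r).

Lemma p_gt1 : (1 < p)%N. Proof. exact: prime_gt1. Qed.
Lemma q_gt1 : (1 < p ^ r)%N.
Proof. by rewrite -(exp1n r) ltn_exp2r ?p_gt1. Qed.

Lemma ZvalD (a b : R) : nat_of_ord (a + b) = ((nat_of_ord a + nat_of_ord b) %% p ^ r)%N.
Proof. by rewrite /=; f_equal; apply: Zp_cast; exact: q_gt1. Qed.
Lemma ZvalM (a b : R) : nat_of_ord (a * b) = ((nat_of_ord a * nat_of_ord b) %% p ^ r)%N.
Proof. by rewrite /=; f_equal; apply: Zp_cast; exact: q_gt1. Qed.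

Definition rho (a : R) : 'Z_p := (nat_of_ord a)%:R.

Lemma modq_p n : ((n %% p ^ r)%N%:R : 'Z_p) = n%:R.
Proof.
apply: val_inj; rewrite /= !val_Zp_nat ?p_gt1 //.
by rewrite modn_dvdm // dvdn_exp.
Qed.

Lemma rhoD a b : rho (a + b) = rho a + rho b.
Proof. by rewrite /rho ZvalD modq_p natrD. Qed.
Lemma rhoM a b : rho (a * b) = rho a * rho b.
Proof. by rewrite /rho ZvalM modq_p natrM. Qed.
Lemma rho_nat n : rho n%:R = n%:R.
Proof. by rewrite /rho (val_Zp_nat q_gt1) modq_p. Qed.
Lemma rho1 : rho 1 = 1.
Proof. by have := rho_nat 1; rewrite !mulr1n. Qed.
Lemma rho0 : rho 0 = 0.
Proof. by have := rho_nat 0; rewrite !mulr0n. Qed.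
Lemma rhoN a : rho (- a) = - rho a.
Proof. by apply/eqP; rewrite -subr_eq0 opprK -rhoD addNr rho0. Qed.
Lemma rhoB a b : rho (a - b) = rho a - rho b.
Proof. by rewrite rhoD rhoN. Qed.
Lemma rhoX a n : rho (a ^+ n) = rho a ^+ n.
Proof. by elim: n => [|n IH]; rewrite ?rho1 // !exprS rhoM IH. Qed.

Lemma Rnat (a : R) : a = (nat_of_ord a)%:R.
Proof. by rewrite natr_Zp. Qed.

Lemma rho_eq0 a : (rho a == 0) = (p %| nat_of_ord a)%N.
Proof.
by rewrite /rho -val_eqE /= val_Zp_nat ?p_gt1 // -/(dvdn p (val a)).
Qed.

Lemma unitR a : (a \is a GRing.unit) = (rho a != 0).
Proof.
rewrite {1}(Rnat a) unitZpE ?q_gt1 // coprime_pexpl // prime_coprime //.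
by rewrite rho_eq0.
Qed.

Lemma unitZp (x : 'Z_p) : (x \is a GRing.unit) = (x != 0).
Proof.
have xlt : (nat_of_ord x < p)%N.
  by apply: leq_trans (ltn_ord x) _; rewrite (Zp_cast p_gt1).
have xE : x = (nat_of_ord x)%:R.
  by apply: val_inj; rewrite /= (val_Zp_nat p_gt1) modn_small.
rewrite {1}xE unitZpE ?p_gt1 // prime_coprime //.
rewrite -val_eqE /=; apply/idP/idP.
  by apply: contra => /eqP ->; rewrite dvdn0.
by apply: contra; rewrite /dvdn modn_small.
Qed.

Variable D : R.
Hypothesis nonres : ~ (exists x : 'Z_p, x ^+ 2 = (nat_of_ord D)%:R).

Lemma Zp_small (x : 'Z_p) : x = (nat_of_ord x)%:R /\ (nat_of_ord x < p)%N.
Proof.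
have xlt : (nat_of_ord x < p)%N.
  by apply: leq_trans (ltn_ord x) _; rewrite (Zp_cast p_gt1).
by split=> //; apply: val_inj; rewrite /= (val_Zp_nat p_gt1) modn_small.
Qed.

Lemma nonres_sq (u v : 'Z_p) : u ^+ 2 = rho D * v ^+ 2 -> v = 0.
Proof.
move=> E; apply/eqP; apply: contraT => vn0.
have vU : v \is a GRing.unit by rewrite unitZp.
case: nonres; exists (u / v); rewrite exprMn E -/(rho D).
by rewrite exprVn mulrK // unitrX.
Qed.

Lemma rhoD_neq0 : rho D != 0.
Proof.
apply/negP => /eqP H; apply: nonres; exists 0.
by rewrite -/(rho D) H expr0n.
Qed.

Lemma DU : D \is a GRing.unit.
Proof. by rewrite unitR rhoD_neq0. Qed.

Lemma two_neq0 : (2%:R : 'Z_p) != 0.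
Proof.
apply/negP => /eqP H2.
have p2 : p = 2%N.
  have : (p %| 2)%N.
    have := congr1 (@nat_of_ord _) H2; rewrite (val_Zp_nat p_gt1) /= => H.
    by apply/dvdnP; exists (2 %/ p)%N; rewrite {1}(divn_eq 2 p) H addn0.
  by move=> H; apply/eqP; rewrite eqn_leq (dvdn_leq _ H) // p_gt1.
apply: nonres; exists (rho D); rewrite -/(rho D).
have [E lt] := Zp_small (rho D).
rewrite E; move: (nat_of_ord (rho D)) lt => n; rewrite p2.
by case: n => [|[|//]] _; rewrite ?expr0n ?expr1n.
Qed.

Lemma twoU : (2%:R : R) \is a GRing.unit.
Proof. by rewrite unitR rho_nat two_neq0. Qed.

Lemma tDU (t : R) : t ^+ 2 - D \is a GRing.unit.
Proof.
rewrite unitR rhoB rhoX subr_eq0; apply/negP => /eqP E.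
have := @nonres_sq (rho t) 1; rewrite expr1n mulr1 E => /(_ erefl) /eqP.
by rewrite oner_eq0.
Qed.

Lemma divE (x y z : R) : z \is a GRing.unit -> x * z = y -> x = y / z.
Proof. by move=> zU <-; rewrite mulrK. Qed.

Lemma mulE (x y z : R) : z \is a GRing.unit -> x * z = y * z -> x = y.
Proof. by move=> zU; apply: mulIr. Qed.

Definition phi (t : R) : R * R :=
  ((t ^+ 2 + D) * (t ^+ 2 - D)^-1, 2%:R * t * (t ^+ 2 - D)^-1).
Definition psi (u : R) : R * R :=
  ((1 + D * u ^+ 2) * (1 - D * u ^+ 2)^-1, 2%:R * u * (1 - D * u ^+ 2)^-1).

Lemma phi_on t : onPell D (phi t).
Proof.
rewrite /onPell /phi /=; have uU := tDU t.
move: uU; set u := t ^+ 2 - D; set ui := u^-1 => uU.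
have -> : ((t ^+ 2 + D) * ui) ^+ 2 - D * (2%:R * t * ui) ^+ 2 = (u * ui) ^+ 2.
  by rewrite /u; ring.
by rewrite /ui mulrV // expr1n.
Qed.

Lemma phi_x1 t : (phi t).1 - 1 = 2%:R * D * (t ^+ 2 - D)^-1.
Proof.
rewrite /phi /=; have uU := tDU t.
move: uU; set u := t ^+ 2 - D; set ui := u^-1 => uU.
have -> : (t ^+ 2 + D) * ui - 1 = 2%:R * D * ui + (u * ui - 1) by rewrite /u; ring.
by rewrite /ui mulrV // subrr addr0.
Qed.

Lemma phi_x1U t : (phi t).1 - 1 \is a GRing.unit.
Proof. by rewrite phi_x1 !unitrM twoU DU unitrV tDU. Qed.

Lemma phi_inv t : t = D * (phi t).2 / ((phi t).1 - 1).
Proof.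
apply: divE; first exact: phi_x1U.
by rewrite phi_x1 /phi /=; ring.
Qed.

Lemma phi_inj : injective phi.
Proof. by move=> t1 t2 E; rewrite (phi_inv t1) (phi_inv t2) E. Qed.

Lemma phi_surj a : onPell D a -> (a.1 - 1) \is a GRing.unit ->
  a = phi (D * a.2 / (a.1 - 1)).
Proof.
case: a => x y /= /eqP E cU.
set t := D * y / (x - 1).
have tc : t * (x - 1) = D * y by rewrite /t divrK.
have uU := tDU t.
have c2U : (x - 1) ^+ 2 \is a GRing.unit by rewrite unitrX.
rewrite /phi; congr pair; apply: divE => //; apply: (mulE c2U).
- transitivity (x * ((t * (x - 1)) ^+ 2 - D * (x - 1) ^+ 2)); first by ring.
  transitivity ((t * (x - 1)) ^+ 2 + D * (x - 1) ^+ 2); last by ring.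
  rewrite tc; apply/eqP; rewrite -subr_eq0.
  have -> : x * ((D * y) ^+ 2 - D * (x - 1) ^+ 2) - ((D * y) ^+ 2 + D * (x - 1) ^+ 2)
     = - D * (x - 1) * (x ^+ 2 - D * y ^+ 2 - 1) by ring.
  by rewrite E subrr mulr0.
- transitivity (y * ((t * (x - 1)) ^+ 2 - D * (x - 1) ^+ 2)); first by ring.
  transitivity (2%:R * (t * (x - 1)) * (x - 1)); last by ring.
  rewrite tc; apply/eqP; rewrite -subr_eq0.
  have -> : y * ((D * y) ^+ 2 - D * (x - 1) ^+ 2) - 2%:R * (D * y) * (x - 1)
     = - D * y * (x ^+ 2 - D * y ^+ 2 - 1) by ring.
  by rewrite E subrr mulr0.
Qed.

Lemma wU u : rho u = 0 -> 1 - D * u ^+ 2 \is a GRing.unit.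
Proof.
move=> ru; rewrite unitR rhoB rhoM rhoX ru rho1 expr0n mulr0 subr0.
by rewrite oner_eq0.
Qed.

Lemma psi_on u : rho u = 0 -> onPell D (psi u).
Proof.
move=> /wU; rewrite /onPell /psi /=.
set w := 1 - D * u ^+ 2; set wi := w^-1 => wUn.
have -> : ((1 + D * u ^+ 2) * wi) ^+ 2 - D * (2%:R * u * wi) ^+ 2 = (w * wi) ^+ 2.
  by rewrite /w; ring.
by rewrite /wi mulrV // expr1n.
Qed.

Lemma psi_x1 u : rho u = 0 -> rho ((psi u).1 - 1) = 0.
Proof.
move=> ru; move: (wU ru); rewrite /psi /=.
set w := 1 - D * u ^+ 2; set wi := w^-1 => wUn.
have -> : (1 + D * u ^+ 2) * wi - 1 = 2%:R * D * u ^+ 2 * wi + (w * wi - 1).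
  by rewrite /w; ring.
by rewrite /wi mulrV // subrr addr0 !rhoM ?rhoX ru ?expr0n ?mulr0 ?mul0r ?mulr0.
Qed.

Lemma psi_x1p u : rho u = 0 -> (psi u).1 + 1 = 2%:R * (1 - D * u ^+ 2)^-1.
Proof.
move=> ru; move: (wU ru); rewrite /psi /=.
set w := 1 - D * u ^+ 2; set wi := w^-1 => wUn.
have -> : (1 + D * u ^+ 2) * wi + 1 = 2%:R * wi + (1 - w * wi) by rewrite /w; ring.
by rewrite /wi mulrV // subrr addr0.
Qed.

Lemma psi_inv u : rho u = 0 -> u = (psi u).2 / ((psi u).1 + 1).
Proof.
move=> ru; apply: divE; first by rewrite psi_x1p // unitrM twoU unitrV wU.
by rewrite psi_x1p // /psi /=; ring.
Qed.

Lemma psi_surj a : onPell D a -> (a.1 - 1) \isn't a GRing.unit ->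
  rho (a.2 / (a.1 + 1)) = 0 /\ a = psi (a.2 / (a.1 + 1)).
Proof.
case: a => x y /= /eqP E; rewrite unitR negbK => /eqP rc.
have rd : rho (x + 1) = 2%:R.
  have -> : x + 1 = (x - 1) + 2%:R by ring.
  by rewrite rhoD rc add0r rho_nat.
have dU : x + 1 \is a GRing.unit by rewrite unitR rd two_neq0.
have ry : rho y = 0.
  apply: (@nonres_sq 0).
  have : rho (D * y ^+ 2) = 0.
    have -> : D * y ^+ 2 = (x - 1) * (x + 1).
      apply/eqP; rewrite -subr_eq0; apply/eqP.
      by transitivity (1 - (x ^+ 2 - D * y ^+ 2)); [ring | rewrite E subrr].
    by rewrite rhoM rc mul0r.
  by rewrite rhoM rhoX expr0n => ->.
set u := y / (x + 1).
have ud : u * (x + 1) = y by rewrite /u divrK.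
have ru : rho u = 0.
  have : rho u * rho (x + 1) = 0 by rewrite -rhoM ud ry.
  rewrite rd => H; apply: (@mulIr _ 2%:R); first by rewrite unitZp two_neq0.
  by rewrite H mul0r.
split=> //.
have wUn := wU ru.
have d2U : (x + 1) ^+ 2 \is a GRing.unit by rewrite unitrX.
rewrite /psi; congr pair; apply: divE => //; apply: (mulE d2U).
- transitivity (x * ((x + 1) ^+ 2 - D * (u * (x + 1)) ^+ 2)); first by ring.
  transitivity ((x + 1) ^+ 2 + D * (u * (x + 1)) ^+ 2); last by ring.
  rewrite ud; apply/eqP; rewrite -subr_eq0.
  have -> : x * ((x + 1) ^+ 2 - D * y ^+ 2) - ((x + 1) ^+ 2 + D * y ^+ 2)
     = (x + 1) * (x ^+ 2 - D * y ^+ 2 - 1) by ring.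
  by rewrite E subrr mulr0.
- transitivity (y * ((x + 1) ^+ 2 - D * (u * (x + 1)) ^+ 2)); first by ring.
  transitivity (2%:R * (u * (x + 1)) * (x + 1)); last by ring.
  rewrite ud; apply/eqP; rewrite -subr_eq0.
  have -> : y * ((x + 1) ^+ 2 - D * y ^+ 2) - 2%:R * y * (x + 1)
     = y * (x ^+ 2 - D * y ^+ 2 - 1) by ring.
  by rewrite E subrr mulr0.
Qed.

Lemma cardR : #|R| = (p ^ r)%N.
Proof. by rewrite card_ord Zp_cast // q_gt1. Qed.

Lemma card_nonunit : #|[set u : R | rho u == 0]| = (p ^ r.-1)%N.
Proof.
have -> : [set u : R | rho u == 0] = ~: [set u : R | u \is a GRing.unit].
  by apply/setP => u; rewrite !inE unitR negbK.
have := cardsC [set u : R | u \is a GRing.unit].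
have -> : #|[set u : R | u \is a GRing.unit]| = totient (p ^ r).
  rewrite -card_units_Zp ?expn_gt0 ?prime_gt0 // cardsT card_sub.
  by apply: eq_card => u; rewrite !inE.
rewrite cardR totient_pfactor //.
move: #|~: _| => k.
have -> : (p ^ r = p * p ^ r.-1)%N by rewrite -expnS prednK.
have p0 : (0 < p)%N by rewrite prime_gt0.
set m := (p ^ r.-1)%N.
by rewrite -{2}(prednK p0) mulSn addnC => /eqP; rewrite eqn_add2r => /eqP.
Qed.

Lemma cardH : #|[set a : R * R | onPell D a]| = (p ^ r.-1 * (p + 1))%N.
Proof.
set H := [set a : R * R | onPell D a].
set U1 := [set a : R * R | (a.1 - 1) \is a GRing.unit].
rewrite -(cardsID U1 H).
have -> : H :&: U1 = phi @: setT.
  apply/setP => a; rewrite !inE; apply/idP/idP.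
  - move=> /andP [Ha Hu]; apply/imsetP; exists (D * a.2 / (a.1 - 1)) => //.
    exact: phi_surj.
  - by case/imsetP => t _ ->; rewrite phi_on phi_x1U.
have -> : H :\: U1 = psi @: [set u | rho u == 0].
  apply/setP => a; rewrite !inE; apply/idP/idP.
  - move=> /andP [Hu Ha]; have [ru ->] := psi_surj Ha Hu.
    by apply/imsetP; exists (a.2 / (a.1 + 1)); rewrite ?inE ?ru.
  - case/imsetP => u; rewrite inE => /eqP ru ->.
    by rewrite psi_on // unitR psi_x1 // eqxx.
rewrite card_imset; last exact: phi_inj.
rewrite card_in_imset; last first.
  by move=> u v; rewrite !inE => /eqP ru /eqP rv E; rewrite (psi_inv ru) (psi_inv rv) E.
rewrite cardsT cardR card_nonunit.
have -> : (p ^ r = p * p ^ r.-1)%N by rewrite -expnS prednK.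
by rewrite mulnDr muln1 mulnC.
Qed.

Local Notation G := (pellT D).

Lemma embX (x : G) k : emb D (val (x ^+ k)%g) = (emb D (val x)) ^+ k.
Proof.
rewrite pvalX; elim: k => [|k IH]; first by rewrite emb1.
by rewrite exprS /pell_pow iterS -/(pell_pow D (val x) k) emb_mul IH mulmxE.
Qed.

Lemma emb_eq1 (x : G) : emb D (val x) = 1 -> x = 1%g.
Proof. by move=> E; apply: val_inj; apply: (@emb_inj _ D); rewrite E emb1. Qed.

Lemma Rpr0 : ((p ^ r)%N%:R : R) = 0.
Proof. by apply: val_inj; rewrite /= (val_Zp_nat q_gt1) modnn. Qed.

Lemma mx_pr0 (M : 'M[R]_2) : M *+ (p ^ r) = 0.
Proof. by rewrite -scaler_nat Rpr0 scale0r. Qed.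

Lemma R_p (z : R) : rho z = 0 -> z = ((nat_of_ord z %/ p)%N%:R) *+ p.
Proof.
move=> /eqP; rewrite rho_eq0 => /divnK E.
by rewrite -mulr_natr -natrM E -Rnat.
Qed.

Lemma mat_p (M : 'M[R]_2) : (forall i j, rho (M i j) = 0) ->
  M = (\matrix_(i, j) ((nat_of_ord (M i j) %/ p)%N%:R)) *+ p.
Proof.
by move=> H; apply/matrixP => i j; rewrite mulmxnE mxE -R_p.
Qed.

Lemma p_gt2 : (2 < p)%N.
Proof.
have := p_gt1; rewrite leq_eqVlt => /orP [/eqP p2|//].
case/negP: two_neq0; apply/eqP; apply: ord_inj.
by rewrite (val_Zp_nat p_gt1) -p2 modnn.
Qed.

Lemma Kpow (x : G) : rho (val x).1 = 1 -> rho (val x).2 = 0 ->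
  (x ^+ (p ^ r.-1) = 1)%g.
Proof.
move=> r1 r2; apply: emb_eq1; rewrite embX.
set M := emb D (val x) - 1.
have HM : forall i j, rho (M i j) = 0.
  move=> i j; rewrite /M emb_sub1 mxE.
  case: (i == j); first by rewrite rhoB r1 rho1 subrr.
  by case: (_ == _); rewrite ?rhoM r2 ?mulr0.
have EX : emb D (val x) = 1 + (\matrix_(i, j) ((nat_of_ord (M i j) %/ p)%N%:R)) *+ p ^ 1.
  by rewrite expn1 -mat_p // /M addrC subrK.
have [e' -> _] := lte_iter pP p_gt2 (isT : (0 < 1)%N) EX (r.-1).
by rewrite add1n prednK // mx_pr0 addr0.
Qed.

Lemma psi_x1E u : rho u = 0 ->
  (psi u).1 - 1 = 2%:R * D * u ^+ 2 * (1 - D * u ^+ 2)^-1.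
Proof.
move=> ru; move: (wU ru); rewrite /psi /=.
set w := 1 - D * u ^+ 2; set wi := w^-1 => wUn.
have -> : (1 + D * u ^+ 2) * wi - 1 = 2%:R * D * u ^+ 2 * wi + (w * wi - 1).
  by rewrite /w; ring.
by rewrite /wi mulrV // subrr addr0.
Qed.

Lemma rho_p : rho (p%:R : R) = 0.
Proof.
by rewrite rho_nat; apply: ord_inj; rewrite (val_Zp_nat p_gt1) modnn.
Qed.

Definition gen : G := exist (fun c : R * R => onPell D c) _ (psi_on rho_p).

Lemma order_gen : #[gen]%g = (p ^ r.-1)%N.
Proof.
set P := (p%:R : R).
set wi := (1 - D * P ^+ 2)^-1.
have r1 : rho (psi P).1 = 1.
  by apply/eqP; rewrite -subr_eq0 -rho1 -rhoB psi_x1 ?rho_p.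
have r2 : rho (psi P).2 = 0 by rewrite /psi /= !rhoM rho_p mulr0 mul0r.
have gp : (gen ^+ (p ^ r.-1) = 1)%g by apply: Kpow.
have /(dvdn_pfactor _ _ pP) [k kle Ek] : (#[gen]%g %| p ^ r.-1)%N.
  by rewrite order_dvdn gp.
move=> //; case: (ltnP k r.-1) => [klt|kge]; last first.
  by rewrite Ek; congr expn; lia.
exfalso.
have gp2 : (gen ^+ (p ^ r.-2) = 1)%g.
  by apply/eqP; rewrite -order_dvdn Ek dvdn_exp2l //; lia.
set c1 := 2%:R * D * P * wi; set c2 := 2%:R * wi.
have EX : emb D (psi P) = 1 + emb D (c1, c2) *+ p ^ 1.
  rewrite expn1 -emb_muln.
  have -> : (c1 *+ p, c2 *+ p) = ((psi P).1 - 1, (psi P).2).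
    rewrite psi_x1E ?rho_p // /psi /= -/wi.
    by rewrite -[c1 *+ p]mulr_natr -[c2 *+ p]mulr_natr -/P /c1 /c2; congr pair; ring.
  by rewrite -emb_sub1 addrC subrK.
have [e' Ee' [t Et]] := lte_iter pP p_gt2 (isT : (0 < 1)%N) EX (r.-2).
have := embX gen (p ^ r.-2); rewrite gp2 /= emb1 Ee' => /(congr1 (fun M : 'M[R]_2 => M 1 0)).
rewrite !mxE /= mulmxnE Et !mxE /= mulmxnE add0r => E.
set u := c2 + _ in E.
have uU : u \is a GRing.unit.
  rewrite unitR /u rhoD -mulr_natr rhoM rho_p mulr0 addr0 -unitR /c2.
  by rewrite unitrM twoU unitrV wU // rho_p.
have N0 : ((p ^ (1 + r.-2))%N%:R : R) = 0.
  by apply: (mulrI uU); rewrite mulr0 mulr_natr -E.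
have := congr1 (@nat_of_ord _) N0; rewrite (val_Zp_nat q_gt1) modn_small /=.
  move=> H; have : (0 < p ^ (1 + r.-2))%N by rewrite expn_gt0 prime_gt0.
  by rewrite H.
rewrite ltn_exp2l ?p_gt1 //; lia.
Qed.


Lemma pell_abelian : abelian [set: G].
Proof.
apply/centsP => x _ y _; apply: val_inj => /=; rewrite /pell_mul.
by case: x y => [[x1 x2] hx] [[y1 y2] hy] /=; congr pair; ring.
Qed.

Lemma sq0_Zp (z : 'Z_p) : z ^+ 2 = 0 -> z = 0.
Proof.
move=> H; apply/eqP; apply: contraT => zn0.
have : z ^+ 2 \is a GRing.unit by rewrite unitrX // unitZp.
by rewrite H unitr0.
Qed.

Lemma notK_unit (x : G) : ~~ ((rho (val x).1 == 1) && (rho (val x).2 == 0)) ->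
  emb D (val x) - 1 \is a GRing.unit.
Proof.
move=> nK; rewrite emb_sub1; apply: emb_unit; rewrite unitR.
apply: contra nK; rewrite rhoB rhoX rhoM rhoX rhoB rho1 subr_eq0 => /eqP E.
have r2 : rho (val x).2 = 0 by apply: nonres_sq E.
rewrite r2 eqxx andbT; move: E; rewrite r2 expr0n mulr0 => /sq0_Zp /eqP.
by rewrite subr_eq0.
Qed.

Lemma cardG : #|[set: G]| = (p ^ r.-1 * (p + 1))%N.
Proof.
by rewrite cardsT card_sig -cardH; apply: eq_card => a; rewrite !inE.
Qed.


Lemma pell_cyclic : cyclic [set: G].
Proof.
have abG := pell_abelian.
apply: nil_Zgroup_cyclic; last exact: abelian_nil.
apply/forall_inP => V /SylowP [q q_pr qSyl].
have abV := abelianS (subsetT V) abG.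
case: (eqVneq q p) => [qp | qnp].
  rewrite qp in qSyl.
  have Vcard : #|V| = (p ^ r.-1)%N.
    have h1 : (0 < p ^ r.-1)%N by rewrite expn_gt0 prime_gt0.
    have h2 : (0 < p + 1)%N by rewrite addn1.
    rewrite (card_Hall qSyl) cardG p_part lognM //.
    by rewrite pfactorK // logn_coprime ?addn0 // addn1 coprimenS.
  have gV : gen \in V.
    rewrite (mem_normal_Hall qSyl) ?inE //; last by rewrite -sub_abelian_normal ?subsetT.
    by rewrite /p_elt order_gen pnatX pnat_id.
  apply/cyclicP; exists gen; apply/eqP; rewrite eq_sym eqEcard cycle_subG gV /=.
  by rewrite -orderE order_gen Vcard.
apply: (@div_ring_mul_group_cyclic _ _ _ (fun x : G => emb D (val x))).
- exact: emb1.
- by move=> x y _ _; rewrite pvalM emb_mul mulmxE.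
- move=> x /setD1P [xn1 xV]; apply: notK_unit; apply/negP => /andP [/eqP r1 /eqP r2].
  have := Kpow r1 r2 => /eqP; rewrite -order_dvdn => dp.
  have dV := order_dvdG xV.
  have cop : coprime (p ^ r.-1) #|V|.
    rewrite (card_pgroup (pHall_pgroup qSyl)) coprimeXl // coprimeXr //.
    by rewrite prime_coprime // dvdn_prime2 // eq_sym.
  have : (#[x]%g %| 1)%N by rewrite -(eqP cop) dvdn_gcd dp dV.
  by rewrite dvdn1 order_eq1 (negbTE xn1).
- exact: abV.
Qed.

End Pell.
Theorem theorem1 (p r : nat) (D : 'Z_(p ^ r)) :
  prime p -> (0 < r)%N ->
  D \is a GRing.unit ->
  ~ (exists x : 'Z_p, x ^+ 2 = (nat_of_ord D)%:R) ->
  #|[set a : 'Z_(p ^ r) * 'Z_(p ^ r) | onPell D a]| = (p ^ r.-1 * (p + 1))%N /\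
  exists g : 'Z_(p ^ r) * 'Z_(p ^ r),
    onPell D g /\ forall h, onPell D h -> exists k : nat, h = pell_pow D g k.
Proof.
move=> pP r0 _ nr; split; first exact: (cardH pP r0 nr).
have /cyclicP [x Ex] := pell_cyclic pP r0 nr.
exists (val x); split; first exact: (valP x).
move=> h hh.
have : (exist (fun c => onPell D c) h hh : pellT D) \in <[x]>%g by rewrite -Ex inE.
by case/cycleP => k Ek; exists k; rewrite -pvalX -Ek.
Qed.
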